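(* Let $\mathcal{W}\in\mathbb{R}^{w_1\times\cdots\times w_N}$ with $N\ge 2$. For $n=1,\dots,N$ let $e_n(m)\in\mathbb{Z}_{>0}^N$ denote the shape with $m$ in position $n$ and $1$ in all other positions, and let $\mathbf{1}=(1,\dots,1)$. (i) (CP) If $\mathcal{W}_{i_1\cdots i_N}=\sum_{r=1}^{R}U^{(1)}_{r i_1}\cdots U^{(N)}_{r i_N}$ for some matrices $U^{(n)}\in\mathbb{R}^{R\times w_n}$, then $\mathcal{W}$ admits a SeKron representation with $S=N$, ranks $R_1=R$, $R_2=\cdots=R_{N-1}=1$, and factor shapes $e_n(w_n)$ for the $n$-th factor. (ii) (Tucker) If $\mathcal{W}_{i_1\cdots i_N}=\sum_{r_1,\dots,r_N}\mathcal{G}_{r_1\cdots r_N}U^{(1)}_{i_1r_1}\cdots U^{(N)}_{i_Nr_N}$ for some core $\mathcal{G}\in\mathbb{R}^{R_1^{T}\times\cdots\times R_N^{T}}$ and matrices $U^{(n)}\in\mathbb{R}^{w_n\times R^{T}_n}$, then $\mathcal{W}$ admits a SeKron representation with $S=N+1$, ranks $R_n=R^{T}_n$ ($n=1,\dots,N$), factor shapes $e_n(w_n)$ for the $n$-th factor ($n\le N$) and $\mathbf{1}$ for the $(N+1)$-th factor. (iii) (Tensor Ring, and hence Tensor Train as the case $R^{TR}_1=1$) If $\mathcal{W}_{i_1\cdots i_N}=\sum_{r_1,\dots,r_N}\mathcal{G}^{(1)}_{i_1r_1r_2}\mathcal{G}^{(2)}_{i_2r_2r_3}\cdots\mathcal{G}^{(N)}_{i_Nr_Nr_{N+1}}$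 with $r_{N+1}:=r_1$, for some cores $\mathcal{G}^{(n)}\in\mathbb{R}^{w_n\times R^{TR}_n\times R^{TR}_{n+1}}$ with $R^{TR}_{N+1}=R^{TR}_1$, then $\mathcal{W}$ admits a SeKron representation with $S=N+1$, ranks $R_n=R^{TR}_n$ ($n=1,\dots,N$), factor shape $\mathbf{1}$ for the first factor and $e_n(w_n)$ for the $(n+1)$-th factor ($n=1,\dots,N$).
   Context: Indices are 0-based. Kronecker product of tensors $\mathcal{A}\in\mathbb{R}^{a_1\times\cdots\times a_N}$, $\mathcal{B}\in\mathbb{R}^{b_1\times\cdots\times b_N}$: $(\mathcal{A}\otimes\mathcal{B})_{i_1\cdots i_N}=\mathcal{A}_{j_1\cdots j_N}\mathcal{B}_{k_1\cdots k_N}$, $j_n=\lfloor i_n/b_n\rfloor$, $k_n=i_n\bmod b_n$; it is associative and bilinear. A SeKron representation of $\mathcal{W}$ with sequence length $S$, ranks $R_1,\dots,R_{S-1}$ and factor shapes $(a^{(k)}_1,\dots,a^{(k)}_N)$, $k=1,\dots,S$ (with $\prod_k a^{(k)}_n=w_n$), is an identity $\mathcal{W}=\sum_{r_1=1}^{R_1}\cdots\sum_{r_{S-1}=1}^{R_{S-1}}\mathcal{A}^{(1)}_{r_1}\otimes\mathcal{A}^{(2)}_{r_1r_2}\otimes\cdots\otimes\mathcal{A}^{(S-1)}_{r_1\cdots r_{S-1}}\otimes\mathcal{A}^{(S)}_{r_1\cdots r_{S-1}}$ with $\mathcal{A}^{(k)}_{\cdots}\in\mathbb{R}^{a^{(k)}_1\times\cdots\times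 a^{(k)}_N}$. *)

(* Defs.v *)
From HB Require Import structures.
From mathcomp Require Import all_boot all_order all_algebra.
From mathcomp Require Import reals.
Set Implicit Arguments. Unset Strict Implicit. Unset Printing Implicit Defensive.
Import Order.TTheory GRing.Theory Num.Theory.
Local Open Scope ring_scope.

(* An order-N tensor is a function on multi-indices i : 'I_N -> nat (0-based).
   A tensor "of shape w" is only ever evaluated at valid indices,
   i.e. those with  i n < w n  for all n. *)
Definition tensor (R : Type) (N : nat) := ('I_N -> nat) -> R.

Definition valid_index (N : nat) (w : 'I_N -> nat) (i : 'I_N -> nat) : Prop :=
  forall n : 'I_N, (i n < w n)%N.

Definition kron (R : nzRingType) (N : nat) (b : 'I_N -> nat)
  (A B : tensor R N) : tensor R N :=
  fun i => A (fun n => (i n %/ b n)%N) * B (fun n => (i n %% b n)%N).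

Definition shape_prod (N : nat) (shs : seq ('I_N -> nat)) : 'I_N -> nat :=
  fun n => (\prod_(a <- shs) a n)%N.

Fixpoint kron_list (R : nzRingType) (N : nat) (l : seq (('I_N -> nat) * tensor R N))
  : tensor R N :=
  match l with
  | [::] => fun _ => 1
  | (a, A) :: rest => kron (shape_prod (map fst rest)) A (kron_list rest)
  end.

Fixpoint sum_ranks (R : nzRingType) (ranks : seq nat) (f : seq nat -> R) : R :=
  match ranks with
  | [::] => f [::]
  | Rk :: rest => \sum_(r < Rk) sum_ranks rest (fun s => f ((r : nat) :: s))
  end.

(* SeKron representation of W (shape w) with sequence length S, ranks
   [:: R_1; ...; R_{S-1}] and factor shapes (shapes k), k = 0..S-1 (0-based):
   there are factors A k rs (k-th factor depending on the first
   min(k+1, S-1) rank indices) such that for every valid index i,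
   W_i = sum_{r_1..r_{S-1}} (A^(1)_{r_1} ⊗ A^(2)_{r_1 r_2} ⊗ ... ⊗ A^(S)_{r_1..r_{S-1}})_i. *)
Definition is_SeKron (R : nzRingType) (N : nat) (w : 'I_N -> nat) (W : tensor R N)
  (S : nat) (ranks : seq nat) (shapes : nat -> 'I_N -> nat) : Prop :=
  [/\ (0 < S)%N, size ranks = S.-1,
      (forall n : 'I_N, (\prod_(k < S) shapes k n)%N = w n) &
      exists A : nat -> seq nat -> tensor R N,
        forall i, valid_index w i ->
          W i = sum_ranks ranks (fun rs =>
                  kron_list [seq (shapes k, A k (take k.+1 rs)) | k <- iota 0 S] i)].

Definition e_shape (N : nat) (w : 'I_N -> nat) (k : nat) : 'I_N -> nat :=
  fun n => if (n : nat) == k then w n else 1%N.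

(* Main.v *)
Require Import Defs.
From HB Require Import structures.
From mathcomp Require Import all_boot all_order all_algebra.
From mathcomp Require Import reals.
From Stdlib Require Import FunctionalExtensionality.
Import Order.TTheory GRing.Theory Num.Theory.
Local Open Scope ring_scope.

Lemma mod_div_aux (x b C Q : nat) : (b %| C)%N -> (((x %% (C * Q)) %/ Q) %% b = (x %/ Q) %% b)%N.
Proof. by move=> dv; rewrite -modn_divl (modn_dvdm _ dv). Qed.

Lemma kron_list_iota (R : nzRingType) (N : nat) (f : nat -> ('I_N -> nat) * tensor R N)
  S m i :
  (forall n, i n < \prod_(m <= k < m + S) (f k).1 n)%N ->
  kron_list (map f (iota m S)) i =
  \prod_(m <= k < m + S) (f k).2 (fun n =>
     (i n %/ \prod_(k.+1 <= j < m + S) (f j).1 n) %% (f k).1 n)%N.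
Proof.
elim: S m i => [|S IH] m i Hi.
  by rewrite /= big_geq // addn0.
rewrite [iota _ _]/= [map _ _]/= big_ltn ?addnS ?ltnS ?leq_addr //.
have Hsh : shape_prod [seq x.1 | x <- [seq f k | k <- iota m.+1 S]] =
   fun n => (\prod_(m.+1 <= k < m.+1 + S) (f k).1 n)%N.
  apply: functional_extensionality => n.
  by rewrite /shape_prod -map_comp big_map /index_iota addSn subSS addKn.
case E: (f m) => [a A] /=.
rewrite Hsh /kron IH; last first.
  move=> n; rewrite ltn_pmod //.
  have := Hi n; rewrite big_ltn ?addnS ?ltnS ?leq_addr // E /= addSn.
  by case: (\prod_(_ <= _ < _) _)%N => //; rewrite muln0.
congr (_ * _).
  congr A; apply: functional_extensionality => n.
  rewrite -addSn modn_small // ltn_divLR.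
    by have := Hi n; rewrite big_ltn ?addnS ?ltnS ?leq_addr // E /= addSn mulnC.
  have := Hi n; rewrite big_ltn ?addnS ?ltnS ?leq_addr // E /= addSn.
  by case: (\prod_(_ <= _ < _) _)%N => //; rewrite muln0.
rewrite -addSn.
apply: eq_big_nat => k /andP [Hk1 Hk2].
congr (f k).2; apply: functional_extensionality => n.
rewrite (@big_cat_nat _ _ _ k.+1) //=; last exact: ltnW.
rewrite mod_div_aux // big_nat_recr //=.
exact: dvdn_mull.
Qed.

Lemma eq_sum_ranks (R : nzRingType) (l : seq nat) (f g : seq nat -> R) :
  (forall rs, f rs = g rs) -> sum_ranks l f = sum_ranks l g.
Proof.
elim: l f g => [|a l IH] f g H /=; first exact: H.
by apply: eq_bigr => r _; apply: IH.
Qed.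

Lemma sum_ranks_cons (R : nzRingType) a l (f : seq nat -> R) :
  sum_ranks (a :: l) f = \sum_(r < a) sum_ranks l (fun s => f ((r : nat) :: s)).
Proof. by []. Qed.

Lemma sum_ranks_ones (R : nzRingType) k (f : seq nat -> R) :
  sum_ranks (nseq k 1%N) f = f (nseq k 0%N).
Proof.
elim: k f => [|k IH] f //=.
by rewrite big_ord1 IH.
Qed.

Lemma prod_e_shape N (w : 'I_N -> nat) S (n : 'I_N) : (n < S)%N ->
  (\prod_(k < S) e_shape w k n)%N = w n.
Proof.
move=> Hn; rewrite (bigD1 (Ordinal Hn)) //= big1 ?muln1.
  by rewrite /e_shape eqxx.
move=> k Hk; rewrite /e_shape; case: eqP => // E.
by move: Hk; rewrite -val_eqE /= E eqxx.
Qed.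

Lemma prod_e_shape_gt N (w : 'I_N -> nat) (n : 'I_N) a b : (n < a)%N ->
  (\prod_(a <= j < b) e_shape w j n)%N = 1%N.
Proof.
move=> Ha; rewrite big_nat big1 // => j /andP [H1 _].
have : (n : nat) != j by rewrite neq_ltn (leq_trans Ha H1).
by rewrite /e_shape => /negbTE ->.
Qed.

Theorem theorem2 (R : realType) (N : nat) (w : 'I_N -> nat) (W : tensor R N) :
  (1 < N)%N ->
  (* (i) CP *)
  (forall (Rcp : nat) (U : 'I_N -> nat -> nat -> R),
     (forall i, valid_index w i ->
        W i = \sum_(r < Rcp) \prod_(n < N) U n r (i n)) ->
     is_SeKron w W N (Rcp :: nseq (N - 2) 1%N) (e_shape w))
  /\
  (* (ii) Tucker *)
  (forall (RT : 'I_N -> nat) (G : tensor R N) (U : 'I_N -> nat -> nat -> R),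
     (forall i, valid_index w i ->
        W i = sum_ranks [seq RT n | n <- enum 'I_N] (fun rs =>
                G (fun n => nth 0%N rs n) *
                \prod_(n < N) U n (i n) (nth 0%N rs n))) ->
     is_SeKron w W N.+1 [seq RT n | n <- enum 'I_N] (e_shape w))
  /\
  (* (iii) Tensor ring (r_{N+1} := r_1) *)
  (forall (RTR : 'I_N -> nat) (G : 'I_N -> nat -> nat -> nat -> R),
     (forall i, valid_index w i ->
        W i = sum_ranks [seq RTR n | n <- enum 'I_N] (fun rs =>
                \prod_(n < N) G n (i n) (nth 0%N rs n) (nth 0%N rs ((n + 1) %% N)))) ->
     is_SeKron w W N.+1 [seq RTR n | n <- enum 'I_N]
       (fun k => if k is k'.+1 then e_shape w k' else (fun _ => 1%N))).
Proof.
case: N w W => [|[|N]] w W // _.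
split; [|split].
- move=> Rcp U HW; split => //.
    by rewrite /= size_nseq subSS subn1.
  move=> n; exact: prod_e_shape.
  exists (fun k rs => fun j => U (inord k) (head 0%N rs) (j (inord k))).
  move=> i Hi; rewrite HW // sum_ranks_cons; apply: eq_bigr => r _.
  rewrite sum_ranks_ones.
  rewrite (@kron_list_iota _ _ (fun k => (e_shape w k,
     (fun j => U (inord k) (head 0%N (take k.+1 ((r : nat) :: nseq (N.+2 - 2) 0%N))) (j (inord k)))))); last first.
    move=> n; rewrite add0n big_mkord prod_e_shape //; exact: Hi.
  rewrite add0n big_mkord; apply: eq_bigr => k _ /=.
  rewrite inord_val prod_e_shape_gt // divn1 /e_shape eqxx modn_small //.
- move=> RT G U HW; split.
  + by [].
  + by rewrite size_map size_enum_ord.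
  + move=> n; apply: prod_e_shape; exact: (leq_trans (ltn_ord n)).
  exists (fun k rs => if (k < N.+2)%N then (fun j => U (inord k) (j (inord k)) (nth 0%N rs k))
                      else (fun _ => G (fun n => nth 0%N rs n))).
  move=> i Hi; rewrite HW //; apply: eq_sum_ranks => rs.
  rewrite (@kron_list_iota _ _ (fun k => (e_shape w k,
     if (k < N.+2)%N then (fun j => U (inord k) (j (inord k)) (nth 0%N (take k.+1 rs) k))
     else (fun _ => G (fun n => nth 0%N (take k.+1 rs) n))))); last first.
    move=> n; rewrite add0n big_mkord prod_e_shape; first exact: Hi.
    by apply: (leq_trans (ltn_ord n)).
  rewrite add0n big_nat_recr //= ltnn mulrC; congr (_ * _); last first.
    congr G; apply: functional_extensionality => n; rewrite nth_take //.
    by apply: (leq_trans (ltn_ord n)).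
  rewrite big_mkord; apply: eq_bigr => k _ /=.
  rewrite ltn_ord inord_val prod_e_shape_gt // divn1 /e_shape eqxx modn_small //.
  by rewrite nth_take.
- move=> RTR G HW; split.
  + by [].
  + by rewrite size_map size_enum_ord.
  + move=> n; rewrite big_ord_recl /= mul1n.
    apply: prod_e_shape; exact: (leq_trans (ltn_ord n)).
  exists (fun k rs => if k is k'.+1 then
            (fun j => G (inord k') (j (inord k')) (nth 0%N rs k') (nth 0%N rs ((k' + 1) %% N.+2)))
          else (fun _ => 1)).
  move=> i Hi; rewrite HW //; apply: eq_sum_ranks => rs.
  rewrite (@kron_list_iota _ _ (fun k => (if k is k'.+1 then e_shape w k' else (fun _ => 1%N),
     if k is k'.+1 then
            (fun j => G (inord k') (j (inord k')) (nth 0%N (take k.+1 rs) k')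
                (nth 0%N (take k.+1 rs) ((k' + 1) %% N.+2)))
          else (fun _ => 1)))); last first.
    move=> n; rewrite add0n big_mkord big_ord_recl /= mul1n prod_e_shape; first exact: Hi.
    by apply: (leq_trans (ltn_ord n)).
  rewrite add0n big_ltn //= mul1r big_add1 /= big_mkord; apply: eq_bigr => k _ /=.
  have Hg : forall (n : 'I_N.+2) a b, (n.+1 < a)%N ->
     (\prod_(a <= j < b) (if j is k'.+1 then e_shape w k' else (fun _ => 1%N)) n)%N = 1%N.
    move=> n a b Ha; rewrite big_nat big1 // => j /andP [H1 _].
    case: j H1 => [|j] H1; first by move: (leq_trans Ha H1).
    have : (n : nat) != j by rewrite neq_ltn -ltnS (leq_trans Ha H1).
    by rewrite /e_shape => /negbTE ->.
  rewrite inord_val Hg // divn1 /e_shape eqxx (modn_small (Hi k)) !nth_take //.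
  by rewrite ltnS (leq_trans (leq_mod _ _)) // addn1.
Qed.
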